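(* Let $M:Z^n\times Z\to[0,B]$ be an $(\epsilon,\delta)$-differentially private evaluation algorithm and let $P$ be an arbitrary distribution over $Z$. Then for every positive integer $k$, $$\mathbb{E}_{S,S'\sim P^n}\Big[\big(\mathcal{E}_{S'}[M(S)]\big)^k\Big]\le e^{k^2\epsilon}\cdot\mathbb{E}_{S\sim P^n}\Big[\big(\mathcal{E}_S[M(S)]+k\delta B\big)^k\Big].$$
   Context: $M$ is an $(\epsilon,\delta)$-differentially private evaluation algorithm if for every $z\in Z$, the randomized output $M(S,z)$ is $(\epsilon,\delta)$-differentially private with respect to $S$: for all $S,S'\in Z^n$ differing in a single element and every set $O$, $\Pr[M(S,z)\in O]\le e^{\epsilon}\Pr[M(S',z)\in O]+\delta$. For $S=(z_1,\dots,z_n)$ and $S'=(z'_1,\dots,z'_n)$ drawn independently from $P^n$, $\mathcal{E}_S[M(S)]=\frac1n\sum_{i\in[n]}\mathbb{E}_M[M(S,z_i)]$ and $\mathcal{E}_{S'}[M(S)]=\frac1n\sum_{i\in[n]}\mathbb{E}_M[M(S,z'_i)]$. *)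

(* Defs.v *)
From HB Require Import structures.
From mathcomp Require Import all_boot all_order all_algebra.
From mathcomp Require Import all_classical all_reals all_analysis measurable_realfun.
Set Implicit Arguments. Unset Strict Implicit. Unset Printing Implicit Defensive.
Import Order.TTheory GRing.Theory Num.Theory.
Local Open Scope classical_set_scope.
Local Open Scope ring_scope.

(* A randomized evaluation algorithm M : Z^n x Z -> R is represented by the
   law (output distribution) M S z of its random output, a probability
   measure on the reals. *)
Definition mechanism d (Z : measurableType d) (R : realType) (n : nat) :=
  n.-tuple Z -> Z -> probability R R.

Definition neighbors d (Z : measurableType d) (n : nat) (S S' : n.-tuple Z) :=
  S <> S' /\ exists i : 'I_n, forall j : 'I_n, j != i -> tnth S j = tnth S' j.

Definition dp_eval d (Z : measurableType d) (R : realType) (n : nat)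
  (M : mechanism Z R n) (eps delta : R) :=
  forall (z : Z) (S S' : n.-tuple Z), neighbors S S' ->
  forall O : set R, measurable O ->
    (M S z O <= (expR eps)%:E * M S' z O + delta%:E)%E.

Definition bounded_in d (Z : measurableType d) (R : realType) (n : nat)
  (M : mechanism Z R n) (B : R) :=
  forall S z, M S z `[0, B]%classic = 1%E.

Definition mech_measurable d (Z : measurableType d) (R : realType) (n : nat)
  (M : mechanism Z R n) :=
  forall O : set R, measurable O ->
    measurable_fun [set: n.-tuple Z * Z] (fun p => M p.1 p.2 O).

Definition mech_mean d (Z : measurableType d) (R : realType) (n : nat)
  (M : mechanism Z R n) (S : n.-tuple Z) (z : Z) : R :=
  Rintegral (M S z) [set: R] id.

Definition emp_eval d (Z : measurableType d) (R : realType) (n : nat)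
  (M : mechanism Z R n) (S T : n.-tuple Z) : R :=
  (n%:R)^-1 * \sum_(i < n) mech_mean M S (tnth T i).

Definition is_product_prob d (Z : measurableType d) (R : realType) (n : nat)
  (P : probability Z R) (Pn : probability (n.-tuple Z) R) :=
  forall A : 'I_n -> set Z, (forall i, measurable (A i)) ->
    Pn [set S | forall i, A i (tnth S i)] = (\prod_(i < n) P (A i))%E.

(* Main.v *)
Require Import Defs.
From HB Require Import structures.
From mathcomp Require Import all_boot all_order all_algebra.
From mathcomp Require Import all_classical all_reals all_analysis measurable_realfun.
From mathcomp Require Import lra.
Import Order.TTheory GRing.Theory Num.Theory.
Local Open Scope classical_set_scope.
Local Open Scope ring_scope.
Set Implicit Arguments. Unset Strict Implicit. Unset Printing Implicit Defensive.

Lemma bigsetI_ordP {T : Type} {m} {F : 'I_m -> set T} {x} :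
  (\big[setI/setT]_(i < m) F i) x <-> forall i, F i x.
Proof.
split.
  by move=> H i; move: H; rewrite (bigD1 i) //= => -[].
by move=> H; elim/big_ind : _ => //; move=> X Y HX HY; split.
Qed.

Lemma bigsetU_ordP {T : Type} {m} {F : 'I_m -> set T} {x} :
  (\big[setU/set0]_(i < m) F i) x -> exists i, F i x.
Proof.
elim/big_ind : _ => //; first by move=> X Y HX HY [/HX|/HY].
by move=> i Hi; exists i.
Qed.

Section swap.
Context d (Z : measurableType d) (R : realType) (n : nat).

Definition tsel (I : pred 'I_n) (S T : n.-tuple Z) : n.-tuple Z :=
  [tuple if I j then tnth T j else tnth S j | j < n].

Lemma tnth_tsel I S T j : tnth (tsel I S T) j = if I j then tnth T j else tnth S j.
Proof. by rewrite tnth_map tnth_ord_tuple. Qed.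

Lemma measurable_tsel d' (X : measurableType d') I (f g : X -> n.-tuple Z) :
  measurable_fun setT f -> measurable_fun setT g ->
  measurable_fun setT (fun x => tsel I (f x) (g x)).
Proof.
move=> mf mg; apply/measurable_fun_tnthP => j /=.
have -> : ((fun S => tnth S j) \o (fun x => tsel I (f x) (g x))) =
   if I j then ((fun S => tnth S j) \o g) else ((fun S => tnth S j) \o f).
  by apply/funext => p /=; rewrite tnth_tsel; case: (I j).
by case: (I j); apply: measurableT_comp => //; exact: measurable_tnth.
Qed.

Definition swapI (I : pred 'I_n) (p : n.-tuple Z * n.-tuple Z) :=
  (tsel I p.1 p.2, tsel I p.2 p.1).

Lemma measurable_swapI I : measurable_fun setT (swapI I).
Proof.
apply: measurable_fun_pair; apply: measurable_tsel;
  (exact: measurable_fst || exact: measurable_snd).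
Qed.

Definition cyl (A : 'I_n -> set Z) : set (n.-tuple Z) :=
  [set S | forall i, A i (tnth S i)].

Lemma measurable_cyl A : (forall i, measurable (A i)) -> measurable (cyl A).
Proof.
move=> mA.
have -> : cyl A = \big[setI/setT]_(i < n) ((fun S => tnth S i) @^-1` A i).
  by apply/seteqP; split => S; rewrite /= bigsetI_ordP.
apply: bigsetI_measurable => i _.
by rewrite -[X in measurable X]setTI; apply: measurable_tnth.
Qed.

Definition dcyl (A A' : 'I_n -> set Z) := cyl A `*` cyl A'.

Definition Gcyl : set (set (n.-tuple Z * n.-tuple Z)) :=
  [set X | exists A A', [/\ forall i, measurable (A i),
      forall i, measurable (A' i) & X = dcyl A A']].

Lemma measurable_Gcyl : measurable = <<s Gcyl >>.
Proof.
apply/seteqP; split; last first.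
  apply: smallest_sub; first exact: sigma_algebra_measurable.
  move=> _ [A [A' [mA mA' ->]]].
  by apply: measurableX; apply: measurable_cyl.
apply: smallest_sub; first exact: smallest_sigma_algebra.
have key (h : n.-tuple Z * n.-tuple Z -> n.-tuple Z) :
   (forall i E, measurable E -> <<s Gcyl >> ((fun p => tnth (h p) i) @^-1` E)) ->
   preimage_set_system setT h measurable `<=` <<s Gcyl >>.
  move=> hG.
  pose BIGU := \big[setU/set0]_(i < n)
     preimage_set_system setT (fun x : n.-tuple Z => tnth x i) measurable.
  move=> X HX.
  have E := @g_sigma_preimageE _ _ setT h BIGU.
  have : <<s setT, preimage_set_system setT h BIGU >> X by rewrite E.
  have sub : preimage_set_system setT h BIGU `<=` <<s Gcyl >>.
    move=> Y [B HB <-]; have [i [E' mE HE]] := bigsetU_ordP HB.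
    rewrite -HE.
    by rewrite !setTI; apply: hG.
  exact: (smallest_sub (@smallest_sigma_algebra _ setT Gcyl) sub).
rewrite subUset; split; apply: key => i E mE; apply: sub_sigma_algebra.
- exists (fun j => if j == i then E else setT), (fun=> setT); split.
  + by move=> j; case: ifP.
  + by [].
  + apply/seteqP; split => -[S S'] /=.
      move=> HE; split => j /=; last by [].
      by case: ifP => // /eqP ->.
    by move=> [/(_ i) + _]; rewrite eqxx.
- exists (fun=> setT), (fun j => if j == i then E else setT); split.
  + by [].
  + by move=> j; case: ifP.
  + apply/seteqP; split => -[S S'] /=.
      move=> HE; split => j /=; first by [].
      by case: ifP => // /eqP ->.
    by move=> [_ /(_ i)]; rewrite eqxx.
Qed.


Lemma preimage_swapI_dcyl I A A' :
  swapI I @^-1` dcyl A A' =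
  dcyl (fun j => if I j then A' j else A j) (fun j => if I j then A j else A' j).
Proof.
apply/seteqP; split => -[S S'] /=; rewrite /dcyl /cyl /=.
  move=> [H1 H2]; split => j /=;
    by have := H1 j; have := H2 j; rewrite !tnth_tsel; case: (I j).
move=> [H1 H2]; split => j /=; rewrite tnth_tsel.
  by have := H1 j; have := H2 j; case: (I j).
by have := H1 j; have := H2 j; case: (I j).
Qed.

Variables (P : probability Z R) (Pn : probability (n.-tuple Z) R).
Hypothesis hP : is_product_prob P Pn.

Lemma prodPn_dcyl A A' : (forall i, measurable (A i)) -> (forall i, measurable (A' i)) ->
  (Pn \x Pn)%E (dcyl A A') = (\prod_(i < n) (P (A i) * P (A' i)))%E.
Proof.
move=> mA mA'; rewrite /dcyl product_measure1E; try exact: measurable_cyl.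
have E1 : Pn (cyl A) = (\prod_(i < n) P (A i))%E := @hP A mA.
have E2 : Pn (cyl A') = (\prod_(i < n) P (A' i))%E := @hP A' mA'.
by rewrite big_split /= -E1 -E2.
Qed.

Lemma swap_invariant I (f : n.-tuple Z * n.-tuple Z -> \bar R) :
  measurable_fun setT f -> (forall x, (0 <= f x)%E) ->
  (\int[(Pn \x Pn)%E]_x f (swapI I x) = \int[(Pn \x Pn)%E]_x f x)%E.
Proof.
move=> mf f0.
have := ge0_integral_pushforward (measurable_swapI I) (Pn \x Pn)%E measurableT mf
  (fun y _ => f0 y).
rewrite preimage_setT => <-.
apply: eq_measure_integral; first exact: measurable_swapI.
move=> mS A mA _.
apply: (measure_unique Gcyl (fun=> setT)) => //.
- exact: measurable_Gcyl.
- move=> X Y [A1 [A1' [mA1 mA1' ->]]] [A2 [A2' [mA2 mA2' ->]]].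
  exists (fun i => A1 i `&` A2 i), (fun i => A1' i `&` A2' i); split.
  + by move=> i; apply: measurableI.
  + by move=> i; apply: measurableI.
  + apply/seteqP; split => -[S S'] /=; rewrite /dcyl /cyl /=.
      by move=> [[H1 H2] [H3 H4]]; split => i; split.
    by move=> [H1 H2]; split; split => i; have [] := H1 i; have [] := H2 i.
- move=> _; exists (fun=> setT), (fun=> setT); split => //.
  by apply/seteqP; split => -[S S'] //=.
- by rewrite bigcup_const.
- move=> _ [A1 [A1' [mA1 mA1' ->]]].
  transitivity ((Pn \x Pn)%E (swapI I @^-1` dcyl A1 A1')); first by [].
  rewrite preimage_swapI_dcyl prodPn_dcyl //; last first.
  + by move=> j; case: (I j).
  + by move=> j; case: (I j).
  rewrite -[RHS]/((Pn \x Pn)%E (dcyl A1 A1')) prodPn_dcyl //; apply: eq_bigr => j _.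
  by case: (I j) => //; rewrite muleC.
- move=> _; rewrite -[X in (X < _)%E]/((Pn \x Pn)%E (swapI I @^-1` setT)).
  rewrite preimage_setT.
  rewrite -setXTT product_measure1E //.
  rewrite -[X in (X * _ < _)%E]/(Pn setT) -[X in (_ * X < _)%E]/(Pn setT).
  by rewrite probability_setT mule1 ltry.
Qed.

End swap.
Section clip.
Context (R : realType).

Definition clip (B : R) (y : R) : R := Num.min (Num.max y 0) B.

Lemma measurable_clip B : measurable_fun setT (clip B).
Proof.
apply: measurable_minr => //; apply: measurable_maxr => //.
Qed.

HB.instance Definition _ (B : R) := isMeasurableFun.Build _ _ _ _ (clip B) (measurable_clip B).

Lemma clip_ge0 B y : 0 <= B -> 0 <= clip B y.
Proof. by move=> B0; rewrite /clip le_min B0 le_max lexx orbT. Qed.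

Lemma clip_le B y : clip B y <= B.
Proof. by rewrite /clip ge_min lexx orbT. Qed.

Lemma clip_id B y : 0 <= y <= B -> clip B y = y.
Proof.
by move=> /andP[y0 yB]; rewrite /clip (max_l y0) (min_l yB).
Qed.

Lemma mean_clip (mu : probability R R) B : mu `[0, B]%classic = 1%E ->
  Rintegral mu setT id = fine (\int[mu]_y (clip B y)%:E).
Proof.
move=> h1; rewrite /Rintegral; congr fine.
apply: ae_eq_integral => //.
  by apply/measurable_EFinP; exact: measurable_clip.
exists (~` `[0, B]%classic); split.
- exact: measurableC.
- rewrite -[LHS]/(mu (~` `[0, B]%classic)).
  by rewrite probability_setC // h1 subee.
- move=> x /= Hx xB; apply: Hx => _.
  by rewrite clip_id //; move: xB; rewrite /= in_itv.
Qed.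


Lemma int_clip_ge0 (mu : probability R R) B : 0 <= B ->
  (0 <= \int[mu]_y (clip B y)%:E)%E.
Proof. by move=> B0; apply: integral_ge0 => y _; rewrite lee_fin clip_ge0. Qed.

Lemma int_clip_le (mu : probability R R) B : 0 <= B ->
  (\int[mu]_y (clip B y)%:E <= B%:E)%E.
Proof.
move=> B0.
have H : (\int[mu]_y (clip B y)%:E <= \int[mu]_y (cst B%:E) y)%E.
  apply: ge0_le_integral => //.
  - by move=> y _; rewrite lee_fin clip_ge0.
  - by apply/measurable_EFinP; exact: measurable_clip.
  - by move=> y _; rewrite lee_fin clip_le.
apply: (le_trans H).
rewrite integral_cst //.
rewrite -[X in (_ * X <= _)%E]/(mu setT) probability_setT mule1 //.
Qed.

Lemma dp_step (mu nu : probability R R) B a del : 0 <= B -> 0 <= del -> 0 <= a ->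
  (forall O, measurable O -> (mu O <= a%:E * nu O + del%:E)%E) ->
  (\int[mu]_y (clip B y)%:E <= a%:E * \int[nu]_y (clip B y)%:E + (del * B)%:E)%E.
Proof.
move=> B0 d0 a0 dp.
have e1 := ge0_expectation_ccdf (P:=mu) (X := clip B) (fun y => @clip_ge0 B y B0).
have e2 := ge0_expectation_ccdf (P:=nu) (X := clip B) (fun y => @clip_ge0 B y B0).
rewrite expectation_def in e1; rewrite expectation_def in e2.
suff H : (\int[lebesgue_measure]_(r in `[0%R, +oo[) ccdf (P:=mu) (clip B) r <=
   a%:E * \int[lebesgue_measure]_(r in `[0%R, +oo[) ccdf (P:=nu) (clip B) r +
   (del * B)%:E)%E.
  by rewrite e1 e2; exact: H.
have cE (P : probability R R) r : ccdf (P:=P) (clip B) r = P (clip B @^-1` `]r, +oo[%classic).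
  by [].
have mD : measurable (`[0%R, +oo[%classic : set R) by [].
have mc (P : probability R R) : measurable_fun (`[0%R, +oo[%classic : set R) (ccdf (P:=P) (clip B)).
  exact: measurable_funS (ccdf_measurable _).
have c0 (P : probability R R) r : (0 <= ccdf (P:=P) (clip B) r)%E.
  by rewrite cE measure_ge0.
have mI : measurable (`[0%R, B[%classic : set R) by [].
have hdel : ((del * B)%:E =
    \int[lebesgue_measure]_(r in `[0%R, +oo[) (del%:E * (\1_(`[0%R, B[%classic : set R) r)%:E))%E.
  rewrite ge0_integralZl_EFin //; last first.
    by apply/measurable_EFinP; apply: measurable_indic.
  rewrite integral_indic //.
  have -> : `[0%R, B[%classic `&` `[0%R, +oo[%classic = `[0%R, B[%classic :> set R.
    apply/seteqP; split => x /=; first by case.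
    by rewrite !in_itv /= => /andP[-> ->].
  rewrite -[X in (_ * X)%E]/(@lebesgue_measure R `[0%R, B[%classic) lebesgue_measure_itv /= lte_fin.
  case: ifP => [_|]; first by rewrite oppr0 adde0 EFinM.
  move=> /negbT; rewrite -leNgt => B0'.
  have -> : B = 0 by apply/eqP; rewrite eq_le B0' B0.
  by rewrite mulr0 mule0.
have mInd : measurable_fun (`[0%R, +oo[%classic : set R)
    (fun r => (del%:E * (\1_(`[0%R, B[%classic : set R) r)%:E)%E).
  by apply: emeasurable_funM => //; apply/measurable_EFinP; apply: measurable_indic.
have ind0 r : (0 <= del%:E * (\1_(`[0%R, B[%classic : set R) r)%:E)%E.
  by rewrite mule_ge0 // lee_fin indicE.
have step1 : (\int[lebesgue_measure]_(r in `[0%R, +oo[) ccdf (P:=mu) (clip B) r <=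
   \int[lebesgue_measure]_(r in `[0%R, +oo[)
     (a%:E * ccdf (P:=nu) (clip B) r + del%:E * (\1_(`[0%R, B[%classic : set R) r)%:E))%E.
  apply: ge0_le_integral => //.
  - exact: mc.
  - apply: emeasurable_funD; last exact: mInd.
    by apply: emeasurable_funM => //; exact: mc.
  move=> r; rewrite /= in_itv /= andbT => r0.
  have [rB|Br] := ltP r B.
    rewrite indicE mem_set ?mule1; last by rewrite /= in_itv /= r0 rB.
    rewrite !cE; apply: dp.
    by rewrite -[X in measurable X]setTI; apply: measurable_clip.
  rewrite cE.
  have -> : clip B @^-1` `]r, +oo[%classic = set0.
    apply/seteqP; split => x //=; rewrite in_itv /= andbT => rx.
    by have := lt_le_trans rx (le_trans (clip_le B x) Br); rewrite ltxx.
  rewrite measure0; apply: adde_ge0 => //.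
  by rewrite mule_ge0.
apply: (le_trans step1).
rewrite ge0_integralD //; last 2 first.
- by move=> r _; rewrite mule_ge0.
- by apply: emeasurable_funM => //; exact: mc.
apply: leeD; rewrite le_eqVlt; apply/orP; left; apply/eqP; last exact: (esym hdel).
by apply: ge0_integralZl_EFin => //; exact: mc.
Qed.

End clip.


Section main.
Context d (Z : measurableType d) (R : realType) (n : nat) (M : mechanism Z R n)
  (eps delta B : R).
Hypotheses (eps0 : 0 <= eps) (del0 : 0 <= delta) (dpM : dp_eval M eps delta)
  (bM : bounded_in M B) (mM : mech_measurable M) (B0 : 0 <= B).

Lemma mean_fin S z : (\int[M S z]_y (clip B y)%:E)%E = (mech_mean M S z)%:E.
Proof.
rewrite /mech_mean (mean_clip (bM S z)) fineK //.
rewrite ge0_fin_numE ?int_clip_ge0 //.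
exact: le_lt_trans (int_clip_le _ B0) (ltry _).
Qed.

Lemma mean_ge0 S z : 0 <= mech_mean M S z.
Proof. by rewrite -lee_fin -mean_fin int_clip_ge0. Qed.

Lemma mean_leB S z : mech_mean M S z <= B.
Proof. by rewrite -lee_fin -mean_fin int_clip_le. Qed.

Lemma measurable_mean :
  measurable_fun setT (fun p : n.-tuple Z * Z => mech_mean M p.1 p.2).
Proof.
have -> : (fun p : n.-tuple Z * Z => mech_mean M p.1 p.2) =
    fine \o (fun p => \int[M p.1 p.2]_y (clip B y)%:E)%E.
  by apply/funext => p /=; rewrite mean_fin.
apply: measurableT_comp; first exact: fine_measurable.
apply: (measurable_fun_integral_kernel (l := fun p => M p.1 p.2)).
- by move=> U mU; exact: mM.
- by move=> y; rewrite lee_fin clip_ge0.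
- by apply/measurable_EFinP; exact: measurable_clip.
Qed.

Lemma measurable_mean_comp d' (X : measurableType d') (a : X -> n.-tuple Z) (b : X -> Z) :
  measurable_fun setT a -> measurable_fun setT b ->
  measurable_fun setT (fun x => mech_mean M (a x) (b x)).
Proof.
move=> ma mb.
exact: (measurableT_comp measurable_mean (measurable_fun_pair ma mb)).
Qed.

Lemma dp_mean S S' z : neighbors S S' ->
  mech_mean M S z <= expR eps * mech_mean M S' z + delta * B.
Proof.
move=> nb.
have := dp_step (mu := M S z) (nu := M S' z) B0 del0 (expR_ge0 eps) (dpM z nb).
by rewrite !mean_fin -EFinM -EFinD lee_fin.
Qed.


Lemma expR_ge1' (x : R) : 0 <= x -> 1 <= expR x.
Proof. by move=> x0; apply: le_trans (expR_ge1Dx x); rewrite lerDl. Qed.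

Definition dset (T S : n.-tuple Z) : {set 'I_n} := [set j | tnth T j != tnth S j].

Lemma chain r : forall (T S : n.-tuple Z) z, (#|dset T S| <= r)%N ->
  mech_mean M T z <= expR (r%:R * eps) * (mech_mean M S z + r%:R * (delta * B)).
Proof.
have dB0 : 0 <= delta * B by rewrite mulr_ge0.
elim: r => [|r IH] T S z hc.
  have E : dset T S = finset.set0 by apply: cards0_eq; apply/eqP; rewrite -leqn0.
  have -> : T = S.
    apply: eq_from_tnth => j; apply/eqP; apply: contraT => hj.
    have : j \in dset T S by rewrite inE.
    by rewrite E inE.
  by rewrite !mul0r expR0 mul1r addr0.
have er : 1 <= expR (r.+1%:R * eps) by apply: expR_ge1'; rewrite mulr_ge0.
have [->|neq] := eqVneq T S.
  apply: le_trans (ler_peMl _ er); last by rewrite addr_ge0 ?mean_ge0 ?mulr_ge0.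
  by rewrite lerDl mulr_ge0.
have [j hj] : exists j, tnth T j != tnth S j.
  case/boolP: [exists j, tnth T j != tnth S j] => [/existsP//|/existsPn H].
  move: neq; rewrite (_ : T = S) ?eqxx //.
  by apply: eq_from_tnth => j; apply/eqP/negPn/H.
pose T' := tsel (pred1 j) T S.
have hcard : (#|dset T' S| <= r)%N.
  have sub : dset T' S \subset dset T S :\ j.
    apply/fintype.subsetP => i; rewrite !inE tnth_tsel /=.
    by case: (i == j) => //; rewrite eqxx.
  apply: leq_trans (subset_leq_card sub) _.
  move: hc; rewrite (cardsD1 j) inE hj /=.
  by rewrite add1n ltnS.
have nb : neighbors T T'.
  split.
    move=> E; have := congr1 (fun t => tnth t j) E.
    by rewrite /= tnth_tsel /= eqxx => h; move: hj; rewrite h eqxx.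
  by exists j => j' hj'; rewrite tnth_tsel /= (negbTE hj').
have h1 := dp_mean z nb.
have h2 := IH T' S z hcard.
have eE : expR (r.+1%:R * eps) = expR eps * expR (r%:R * eps).
  by rewrite -expRD -nat1r mulrDl mul1r.
rewrite eE.
have a1 : 1 <= expR eps := expR_ge1' eps0.
have b1 : 1 <= expR (r%:R * eps) by apply: expR_ge1'; rewrite mulr_ge0.
set a := expR eps in h1 a1 *; set b := expR (r%:R * eps) in h2 b1 *.
set x := delta * B in dB0 h1 h2 *.
set mT := mech_mean M T z in h1 *; set mT' := mech_mean M T' z in h1 h2 *.
set mS := mech_mean M S z in h2 *.
have mS0 : 0 <= mS by apply: mean_ge0.
have h2' : a * mT' <= a * (b * (mS + r%:R * x)) by rewrite ler_wpM2l // (le_trans ler01 a1).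
have hab : x <= a * b * x.
  apply: ler_peMl => //.
  by rewrite -[1]mulr1 ler_pM // ler01.
rewrite -nat1r.
nra.
Qed.


Lemma expand (k : nat) (x : 'I_n -> R) (c : R) :
  (c * \sum_i x i) ^+ k = c ^+ k * \sum_(f : {ffun 'I_k -> 'I_n}) \prod_t x (f t).
Proof.
rewrite exprMn; congr (_ * _).
have -> : (\sum_i x i) ^+ k = \prod_(t < k) \sum_i x i.
  by rewrite prodr_const card_ord.
by rewrite bigA_distr_bigA.
Qed.


Variables (P : probability Z R) (Pn : probability (n.-tuple Z) R).
Hypothesis hP : is_product_prob P Pn.

Lemma measurable_g (k : nat) (f : {ffun 'I_k -> 'I_n}) :
  measurable_fun setT (fun p : n.-tuple Z * n.-tuple Z =>
    \prod_t mech_mean M p.1 (tnth p.2 (f t))).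
Proof.
apply: (measurable_prod (h := fun t (p : n.-tuple Z * n.-tuple Z) =>
   mech_mean M p.1 (tnth p.2 (f t)))) => t _.
apply: measurable_mean_comp => //.
exact: (measurableT_comp (measurable_tnth (f t)) measurable_snd).
Qed.

Lemma measurable_h (k : nat) (f : {ffun 'I_k -> 'I_n}) (a e : R) :
  measurable_fun setT (fun p : n.-tuple Z * n.-tuple Z =>
    e * \prod_t (mech_mean M p.1 (tnth p.1 (f t)) + a)).
Proof.
apply: measurable_funM => //.
apply: (measurable_prod (h := fun t (p : n.-tuple Z * n.-tuple Z) =>
   mech_mean M p.1 (tnth p.1 (f t)) + a)) => t _.
apply: measurable_funD => //; apply: measurable_mean_comp => //.
exact: (measurableT_comp (measurable_tnth (f t)) measurable_fst).
Qed.

Lemma stepB (k : nat) (f : {ffun 'I_k -> 'I_n}) :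
  (\int[(Pn \x Pn)%E]_p (\prod_t mech_mean M p.1 (tnth p.2 (f t)))%:E <=
   \int[(Pn \x Pn)%E]_p (expR ((k ^ 2)%:R * eps) *
      \prod_t (mech_mean M p.1 (tnth p.1 (f t)) + k%:R * (delta * B)))%:E)%E.
Proof.
pose I : pred 'I_n := mem (codom f).
rewrite -(swap_invariant hP I); last 2 first.
- by apply/measurable_EFinP; exact: measurable_g.
- by move=> p; rewrite lee_fin prodr_ge0 // => t _; apply: mean_ge0.
apply: ge0_le_integral => //.
- by move=> p _; rewrite lee_fin prodr_ge0 // => t _; apply: mean_ge0.
- apply/measurable_EFinP; apply: (measurableT_comp (measurable_g f)).
  exact: measurable_swapI.
- by apply/measurable_EFinP; exact: measurable_h.
move=> p _; rewrite lee_fin /swapI /=.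
have hI t : I (f t) by rewrite /I /= codom_f.
under eq_bigr do rewrite tnth_tsel hI.
have hc : (#|dset (tsel I p.1 p.2) p.1| <= k)%N.
  apply: (@leq_trans #|I|).
    apply: subset_leq_card; apply/fintype.subsetP => j.
    by rewrite inE tnth_tsel; case: ifP => [hj _|_]; [exact: hj | rewrite eqxx].
  by apply: leq_trans (card_size _) _; rewrite size_codom card_ord.
have -> : (k ^ 2)%:R * eps = k%:R * (k%:R * eps) by rewrite natrX expr2 mulrA.
rewrite expRM_natl.
have -> : expR (k%:R * eps) ^+ k = \prod_(t < k) expR (k%:R * eps).
  by rewrite prodr_const card_ord.
rewrite -big_split /=.
apply: ler_prod => t _; rewrite mean_ge0 /=.
exact: chain.
Qed.

Lemma stepD (F : n.-tuple Z -> R) : measurable_fun setT F -> (forall S, 0 <= F S) ->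
  (\int[(Pn \x Pn)%E]_p (F p.1)%:E = \int[Pn]_S (F S)%:E)%E.
Proof.
move=> mF F0.
rewrite fubini_tonelli1 //=; last 2 first.
- apply/measurable_EFinP; apply: measurableT_comp => //.
- by move=> p; rewrite lee_fin.
apply: eq_integral => S _; rewrite /fubini_F.
have -> : (\int[Pn]_y (F (S, y).1)%:E)%E = (\int[Pn]_y (cst (F S)%:E y))%E by [].
rewrite integral_cst //.
by rewrite -[X in (_ * X)%E]/(Pn setT) probability_setT mule1.
Qed.

End main.

Lemma int_sum_scale d' (T : measurableType d') (R : realType) (mu : {measure set T -> \bar R})
  (I : finType) (u : I -> T -> R) (c : R) :
  0 <= c -> (forall i, measurable_fun setT (u i)) -> (forall i x, 0 <= u i x) ->
  (\int[mu]_x ((c * \sum_i u i x)%:E) = c%:E * \sum_i \int[mu]_x (u i x)%:E)%E.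
Proof.
move=> c0 mu0 u0.
under eq_integral do rewrite EFinM -sumEFin.
rewrite ge0_integralZl_EFin //.
- rewrite ge0_integral_sum //.
  + by move=> i; apply/measurable_EFinP.
  + by move=> i x _; rewrite lee_fin.
- by move=> x _; apply: sume_ge0 => i _; rewrite lee_fin.
- apply: emeasurable_sum => i; exact/measurable_EFinP.
Qed.



Unset Implicit Arguments.

Theorem lemma29 (d : measure_display) (Z : measurableType d) (R : realType)
  (n : nat) (M : mechanism Z R n) (eps delta B : R)
  (P : probability Z R) (Pn : probability (n.-tuple Z) R) (k : nat) :
  0 <= eps -> 0 <= delta ->
  dp_eval M eps delta -> bounded_in M B -> mech_measurable M ->
  is_product_prob P Pn -> (0 < k)%N ->
  (\int[Pn \x Pn]_SS' ((emp_eval M SS'.1 SS'.2) ^+ k)%:E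
   <= (expR ((k ^ 2)%:R * eps))%:E *
      \int[Pn]_S ((emp_eval M S S + k%:R * delta * B) ^+ k)%:E)%E.
Proof.
move=> eps0 del0 dpM bM mM hP k0.
have B0 : 0 <= B.
  case: (pselect (exists z : Z, True)) => [[z _]|Hn]; last first.
    have E : [set: Z] = set0.
      by apply/seteqP; split => z //= _; apply: Hn; exists z.
    have := probability_setT P; rewrite E measure0 => /eqP.
    by rewrite eq_sym onee_eq0.
  rewrite leNgt; apply/negP => hB.
  have := bM [tuple z | _ < n] z.
  have -> : `[0, B]%classic = set0 :> set R.
    apply/seteqP; split => x //=; rewrite in_itv /= => /andP[x0 xB].
    by have := le_lt_trans (le_trans x0 xB) hB; rewrite ltxx.
  by rewrite measure0 => /eqP; rewrite eq_sym onee_eq0.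
have m0 := mean_ge0 bM B0.
set E := expR ((k ^ 2)%:R * eps).
have E0 : 0 <= E by apply: expR_ge0.
have F0 S : 0 <= (emp_eval M S S + k%:R * delta * B) ^+ k.
  apply: exprn_ge0; apply: addr_ge0; last by rewrite !mulr_ge0.
  by rewrite /emp_eval mulr_ge0 ?invr_ge0 // sumr_ge0.
have [n0|n0] := eqVneq n 0%N.
  have -> : (\int[(Pn \x Pn)%E]_SS' ((emp_eval M SS'.1 SS'.2) ^+ k)%:E)%E = 0%E.
    rewrite -[RHS](integral0 (Pn \x Pn)%E setT); apply: eq_integral => p _.
    rewrite /emp_eval big1 ?mulr0 ?expr0n; last first.
      by move=> i _; have := ltn_ord i; rewrite {2}n0.
    by move: k0; case: (k).
  apply: mule_ge0; first by rewrite lee_fin.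
  by apply: integral_ge0 => S _; rewrite lee_fin.
set c := n%:R^-1 : R.
have c0 : 0 <= c ^+ k by rewrite exprn_ge0 // invr_ge0.
have L : (\int[(Pn \x Pn)%E]_SS' ((emp_eval M SS'.1 SS'.2) ^+ k)%:E)%E =
    ((c ^+ k)%:E * \sum_(f : {ffun 'I_k -> 'I_n})
      \int[(Pn \x Pn)%E]_p (\prod_t mech_mean M p.1 (tnth p.2 (f t)))%:E)%E.
  rewrite -int_sum_scale //; last 2 first.
  - by move=> f; apply: measurable_g.
  - by move=> f p; rewrite prodr_ge0.
  by apply: eq_integral => p _; rewrite /emp_eval expand.
have Rr : ((c ^+ k)%:E * \sum_(f : {ffun 'I_k -> 'I_n})
      \int[(Pn \x Pn)%E]_p (E *
      \prod_t (mech_mean M p.1 (tnth p.1 (f t)) + k%:R * (delta * B)))%:E)%E =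
    (E%:E * \int[Pn]_S ((emp_eval M S S + k%:R * delta * B) ^+ k)%:E)%E.
  rewrite -int_sum_scale //; last 2 first.
  - by move=> f; apply: measurable_h.
  - by move=> f p; rewrite mulr_ge0 // prodr_ge0 // => t _; rewrite addr_ge0 ?mulr_ge0.
  have mF : measurable_fun setT
      (fun S : n.-tuple Z => (emp_eval M S S + k%:R * delta * B) ^+ k).
    apply: measurable_funX; apply: measurable_funD => //.
    apply: measurable_funM => //.
    apply: (@measurable_sum _ _ _ _ _ _ (fun i (S : n.-tuple Z) =>
      mech_mean M S (tnth S i))) => i.
    apply: (measurable_mean_comp bM mM B0) => //.
    exact: measurable_tnth.
  rewrite -(stepD Pn mF F0) -ge0_integralZl_EFin //; last 2 first.
  - by move=> p _; rewrite lee_fin.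
  - by apply/measurable_EFinP; apply: (measurableT_comp mF measurable_fst).
  apply: eq_integral => p _; rewrite -EFinM; congr EFin.
  rewrite -mulr_sumr mulrCA -(expand k (fun j => mech_mean M p.1 (tnth p.1 j) + k%:R * (delta * B))); congr (_ * _).
  rewrite /emp_eval big_split /= sumr_const card_ord mulrDr.
  congr ((_ + _) ^+ _); rewrite -(mulr_natl (k%:R * (delta * B)) n) mulrA /c mulVf ?mul1r ?mulrA //.
  by rewrite pnatr_eq0.
rewrite L -Rr.
apply: lee_wpmul2l; first by rewrite lee_fin.
apply: lee_sum => f _.
exact: (stepB eps0 del0 dpM bM mM B0 hP f).
Qed.
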